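(* Let $d$ be odd, let $c_1\ge\cdots\ge c_u$ be odd positive integers with $c_1\le d$, and let $H=H_d(c_1,\dots,c_u)=C_d(A(0,c_1,\dots,c_u,1))$. Let $P$ be the first summit and $Q$ the last summit of $H$. If $u=0$, then $H$ has exactly $d$ summits, $\operatorname{char}P=(0,1)$ and $\operatorname{char}Q=(0,d)$. If $u\ge1$, let $t=\tfrac12(d-c_1)$; then $t\ge0$, $H$ has exactly $(u+2)t+1$ summits, $\operatorname{char}P=(0,c_1,\dots,c_u,1)$ and $\operatorname{char}Q=(0,c_1+2t,\dots,c_u+2t,1+2t)$.
   Context: Conventions: $k$ a field; linear Nakayama algebras are basic $kQ/I$ with $Q$ a linearly oriented path; modules are finitely generated left modules, indecomposables uniserial; $|M|$ length, $\operatorname{pd}$ projective dimension, $\tau$ Auslander–Reiten translation. Simples $S_1,\dots,S_n$ with $\tau S_i=S_{i-1}$; $\omega_A=S_n$ the simple injective. Even/odd indecomposable: parity of projective dimension. For indecomposable $M$ with composition factors $F_1=\operatorname{soc}M,\dots,F_m=\operatorname{top}M$, $\operatorname{char}M=(z_1,\dots,z_m)$ with $z_i=\operatorname{pd}F_i$ if $F_i$ odd, $z_i=\operatorname{pd}M$ if $F_i$ even. Height = maximal length of indecomposables; summits = indecomposables of maximal length. Concave: Kupisch series weakly increases then weakly decreases. For concave $A$: first summit = summit $P$ with $\operatorname{rad}P$ projective; last summit = summit $Q$ with $Q/\operatorname{soc}Q$ injective. $A(\mathbf z)$ (ascent algebra): for a projective characteristic sequence $\mathbf z$ (non-negative integers,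 exactly one even entry, equal to $0$), the unique ascending (weakly increasing Kupisch series) linear Nakayama algebra with $\operatorname{char}P(\omega_{A(\mathbf z)})=\mathbf z$. $C_d$ (partial $d$-closure): a simple $S$ is $d$-closed if torsionless or the socle of a module of projective dimension $\ge d$; the $d$-cliff module $Y_A=P(\omega_A)/U$ with $U$ the largest submodule of $P(\omega_A)$ with all composition factors $d$-closed; $E_d(A)$ is the one-point extension adding a simple $T=\tau^-\omega_A$ with $\operatorname{rad}P(T)\cong Y_A$ (or $A$ itself if $Y_A=0$); $C_d(A)=E_d^t(A)$ for $t$ with zero $d$-cliff module. *)

(* Defs.v *)
(* A linear Nakayama algebra with simples S_1,...,S_n (tau S_i = S_{i-1},
   S_n simple injective, S_1 simple projective) is given, up to isomorphism,
   by its Kupisch series A = [:: c_1; ...; c_n], c_j = |P(S_j)|.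
   The indecomposable (uniserial) modules are encoded by pairs (b, l):
   top S_b, length l, composition factors S_{b-l+1} (= socle), ..., S_b.
   (b, l) is a module iff 1 <= b <= n and 1 <= l <= c_b. *)
From mathcomp Require Import all_boot all_order.
Set Implicit Arguments.
Unset Strict Implicit.
Unset Printing Implicit Defensive.

(* c_j, 1-based *)
Definition kup (A : seq nat) (j : nat) : nat := nth 0 A j.-1.

Definition kupisch (A : seq nat) : bool :=
  [&& 0 < size A, kup A 1 == 1 &
      all (fun j => (2 <= kup A j.+1) && (kup A j.+1 <= (kup A j).+1))
          (iota 1 (size A).-1)].

Definition ascending (A : seq nat) : bool := sorted leq A.

Definition is_module (A : seq nat) (b l : nat) : bool :=
  [&& 1 <= b, b <= size A, 1 <= l & l <= kup A b].

Definition indec (A : seq nat) : seq (nat * nat) :=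
  [seq (b, l) | b <- iota 1 (size A), l <- iota 1 (kup A b)].

Definition projective (A : seq nat) (b l : nat) : bool := l == kup A b.
(* a uniserial module is injective iff it cannot be extended on top *)
Definition injective (A : seq nat) (b l : nat) : bool :=
  (b == size A) || (kup A b.+1 < l.+1).

(* projective dimension: Omega (b,l) = (b - l, c_b - l) when not projective;
   fuel b suffices since the top index strictly decreases *)
Fixpoint pd_rec (A : seq nat) (fuel b l : nat) : nat :=
  if kup A b <= l then 0 else
  match fuel with
  | 0 => 0
  | f.+1 => (pd_rec A f (b - l) (kup A b - l)).+1
  end.
Definition pd (A : seq nat) (b l : nat) : nat := pd_rec A b b l.

(* the characteristic char M, listed from the socle F_1 to the top F_m *)
Definition charM (A : seq nat) (b l : nat) : seq nat :=
  [seq (let s := pd A i 1 in if odd s then s else pd A b l)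
  | i <- iota (b - l + 1) l].

(* omega_A = S_n, P(omega_A) = (n, c_n) *)
Definition n_of (A : seq nat) : nat := size A.

Definition is_ascent (z : seq nat) (A : seq nat) : Prop :=
  [/\ kupisch A, ascending A & charM A (n_of A) (kup A (n_of A)) = z].

Definition height (A : seq nat) : nat := foldr maxn 0 [seq m.2 | m <- indec A].
Definition summits (A : seq nat) : seq (nat * nat) :=
  [seq m <- indec A | m.2 == height A].
Definition num_summits (A : seq nat) : nat := size (summits A).

(* rad (b,l) = (b-1, l-1) (zero module when l = 1, which is projective) *)
Definition rad_projective (A : seq nat) (b l : nat) : bool :=
  (l == 1) || projective A b.-1 l.-1.
(* (b,l)/soc = (b, l-1) (zero when l = 1, which is injective) *)
Definition top_quot_injective (A : seq nat) (b l : nat) : bool :=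
  (l == 1) || injective A b l.-1.

Definition first_summit (A : seq nat) (b l : nat) : bool :=
  ((b, l) \in summits A) && rad_projective A b l.
Definition last_summit (A : seq nat) (b l : nat) : bool :=
  ((b, l) \in summits A) && top_quot_injective A b l.

(* torsionless indecomposable: isomorphic to a submodule of an indecomposable
   projective P(S_j) = (j, c_j); submodules of a uniserial module share its
   socle and have smaller top *)
Definition torsionless (A : seq nat) (b l : nat) : bool :=
  has (fun j => (j - kup A j + 1 == b - l + 1) && (b <= j)) (iota 1 (size A)).

Definition d_closed (A : seq nat) (d i : nat) : bool :=
  torsionless A i 1 ||
  has (fun m => (m.1 - m.2 + 1 == i) && (d <= pd A m.1 m.2)) (indec A).

(* U: largest submodule of P(omega_A) with all composition factors d-closed;
   the submodules of P(omega_A) have composition factors S_s0,...,S_{s0+k-1} *)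
Definition U_len (A : seq nat) (d : nat) : nat :=
  let n := n_of A in let s0 := n - kup A n + 1 in
  foldr maxn 0 [seq k <- iota 0 (kup A n).+1 | all (d_closed A d) (iota s0 k)].

(* length of the d-cliff module Y_A = P(omega_A)/U *)
Definition cliff_len (A : seq nat) (d : nat) : nat := kup A (n_of A) - U_len A d.

(* one-point extension E_d: new simple T = S_{n+1} with rad P(T) = Y_A,
   so c_{n+1} = |Y_A| + 1 *)
Definition Ed (d : nat) (A : seq nat) : seq nat :=
  if cliff_len A d == 0 then A else rcons A (cliff_len A d).+1.

Definition is_closure (d : nat) (A H : seq nat) : Prop :=
  exists t, H = iter t (Ed d) A /\ cliff_len H d = 0.

Definition first_summit_char (H : seq nat) (s : seq nat) : Prop :=
  (exists b l, first_summit H b l) /\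
  (forall b l, first_summit H b l -> charM H b l = s).
Definition last_summit_char (H : seq nat) (s : seq nat) : Prop :=
  (exists b l, last_summit H b l) /\
  (forall b l, last_summit H b l -> charM H b l = s).

(* Main.v *)
Require Import Defs.
From mathcomp Require Import all_boot all_order.
From mathcomp Require Import zify.
Set Implicit Arguments.
Unset Strict Implicit.
Unset Printing Implicit Defensive.

Module Part1.

Definition gg (A : seq nat) j := j - kup A j.
Definition PP (A : seq nat) a b := pd A b (b - a).

Definition kupP (A : seq nat) : Prop :=
  [/\ 0 < size A, kup A 1 = 1 &
      forall j, 1 <= j -> j < size A -> 2 <= kup A j.+1 /\ kup A j.+1 <= (kup A j).+1].

Lemma kupischP A : kupisch A -> kupP A.
Proof.
case/and3P=> h1 /eqP h2 /allP h3; split=> // j j1 j2.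
have /h3/andP[]: j \in iota 1 (size A).-1 by rewrite mem_iota; lia.
by [].
Qed.

Lemma kupischE A : kupP A -> kupisch A.
Proof.
case=> h1 h2 h3; apply/and3P; split=> //; first by apply/eqP.
apply/allP=> j; rewrite mem_iota=> hj; apply/andP; apply: h3; lia.
Qed.

Lemma kup0 A : kup A 0 = kup A 1.
Proof. by []. Qed.

Section Basic.
Variable A : seq nat.
Hypothesis hA : kupP A.

Lemma kup_pos j : 1 <= j <= size A -> 1 <= kup A j.
Proof.
case: hA=> h1 h2 h3 /andP[j1 j2].
case: j j1 j2 => // [[|j]] _ hj; first by rewrite h2.
by have [] := h3 j.+1 erefl hj; lia.
Qed.

Lemma kup_ge2 j : 2 <= j <= size A -> 2 <= kup A j.
Proof.
case: hA=> h1 h2 h3 /andP[j1 j2].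
case: j j1 j2 => // [[|j]] // _ hj.
by have [] := h3 j.+1 erefl hj.
Qed.

Lemma kup_le j : 1 <= j <= size A -> kup A j <= j.
Proof.
case: hA=> h1 h2 h3.
elim: j => // [[|j]] IH /andP[j1 j2]; first by rewrite h2.
have [] := h3 j.+1 erefl j2.
have := IH ltac:(lia). lia.
Qed.

Lemma kup_step j : 1 <= j -> j < size A -> kup A j.+1 <= (kup A j).+1.
Proof. by case: hA=> _ _ h3 j1 j2; have [] := h3 j j1 j2. Qed.

Lemma gg_mono i j : 1 <= i -> i <= j -> j <= size A -> gg A i <= gg A j.
Proof.
move=> i1 ij js; elim: j ij js => [|j IH]; first lia.
rewrite leq_eqVlt => /orP[/eqP->//|ij] js.
have := IH ij ltac:(lia). have := kup_step (j:=j) ltac:(lia) ltac:(lia).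
have := kup_le (j:=j) ltac:(lia). have := kup_le (j:=j.+1) ltac:(lia).
rewrite /gg; lia.
Qed.

Lemma gg_lt j : 2 <= j <= size A -> gg A j <= j - 2.
Proof. move=> h; have := kup_ge2 h; rewrite /gg; lia. Qed.

Lemma pd_rec_fuel f1 f2 b l : 0 < l -> b <= f1 -> b <= f2 ->
  pd_rec A f1 b l = pd_rec A f2 b l.
Proof.
have k0 : kup A 0 <= 1 by rewrite kup0; case: hA => _ -> _.
elim: f1 f2 b l => [|f1 IH] [|f2] b l l0 b1 b2 /=.
- by [].
- have -> : b = 0 by lia. case: ifP => //; lia.
- have -> : b = 0 by lia. case: ifP => //; lia.
- case: ifP => // hk; congr _.+1; apply: IH; lia.
Qed.

Lemma pd_step a b : a < b -> b <= size A -> gg A b <= a ->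
  PP A a b = if gg A b == a then 0 else (PP A (gg A b) a).+1.
Proof.
move=> ab bs ga; rewrite /PP /pd.
have kb := kup_le (j:=b) ltac:(lia).
case: b ab bs ga kb => [|b] ab bs ga kb //=.
case: ifP => hk.
- have -> : gg A b.+1 = a by move: hk ga; rewrite /gg; lia. by rewrite eqxx.
- have -> : (gg A b.+1 == a) = false by apply/negbTE; move: hk ga; rewrite /gg; lia.
  congr _.+1.
  have -> : b.+1 - (b.+1 - a) = a by lia.
  have -> : kup A b.+1 - (b.+1 - a) = a - gg A b.+1 by rewrite /gg; lia.
  apply: pd_rec_fuel; rewrite /gg; lia.
Qed.

End Basic.

Lemma pd_rec_prefix A B f b l : (forall i, i <= b -> kup A i = kup B i) ->
  pd_rec A f b l = pd_rec B f b l.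
Proof.
elim: f b l => [|f IH] b l h /=; rewrite -h //.
case: ifP => // _; congr _.+1; rewrite IH // => i hi; apply: h; lia.
Qed.

Lemma kup_cat A C i : 0 < size A -> i <= size A -> kup (A ++ C) i = kup A i.
Proof. by move=> h1 h2; rewrite /kup nth_cat ifT //; lia. Qed.

Lemma pd_cat A C b l : 0 < size A -> b <= size A -> pd (A ++ C) b l = pd A b l.
Proof.
move=> h1 h2; rewrite /pd; apply: pd_rec_prefix => i hi; rewrite kup_cat //; lia.
Qed.

Lemma PP_cat A C a b : 0 < size A -> b <= size A -> PP (A ++ C) a b = PP A a b.
Proof. by move=> h1 h2; rewrite /PP pd_cat. Qed.

End Part1.
Import Part1.

Module Part2.

Section S2.
Variable A : seq nat.
Hypothesis hA : kupP A.

Lemma PP01 : PP A 0 1 = 0.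
Proof. by rewrite /PP /pd /=; case: hA => _ -> _. Qed.

Lemma pd_simple x : 2 <= x -> x <= size A ->
  PP A x.-1 x = if gg A x.-1 == gg A x then 1 else (PP A (gg A x.-1) (gg A x)).+2.
Proof.
move=> x2 xs.
have gx := gg_lt hA (j:=x) ltac:(lia).
have gm := gg_mono hA (i:=x.-1) (j:=x) ltac:(lia) ltac:(lia) xs.
rewrite pd_step //; try lia.
rewrite ifF; last by apply/negbTE; lia.
rewrite pd_step //; try lia.
by case: eqP => // /eqP; rewrite eq_sym => ->.
Qed.

Lemma PP_shift N0 N v a b : (forall x, N0 <= x <= N -> kup A x = v) ->
  1 <= N0 -> N <= size A -> N0 <= a -> a < b -> b <= N -> b - a < v ->
  PP A a b = (PP A (a - v) (b - v)).+2.
Proof.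
move=> hv n0 ns na ab bn bav.
have kb : kup A b = v by apply: hv; lia.
have ka : kup A a = v by apply: hv; lia.
have va : v <= a by rewrite -ka; apply: kup_le => //; lia.
rewrite pd_step //; try (rewrite /gg kb; lia); try lia.
rewrite ifF; last by apply/negbTE; rewrite /gg kb; lia.
rewrite /gg kb pd_step //; try (rewrite /gg ka; lia); try lia.
rewrite ifF; last by apply/negbTE; rewrite /gg ka; lia.
by rewrite /gg ka.
Qed.

Lemma PP_simple_pos x : 2 <= x -> x <= size A -> 1 <= PP A x.-1 x.
Proof. by move=> h1 h2; rewrite pd_simple //; case: ifP. Qed.

End S2.

End Part2.
Import Part2.

Module Part3.

Definition pS A i := PP A i.-1 i.

Definition ascP (A : seq nat) := forall j, 1 <= j -> j < size A -> kup A j <= kup A j.+1.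

Lemma ascendingP A : ascending A -> ascP A.
Proof.
move=> /(sortedP 0) h j j1 j2; rewrite /kup.
case: j j1 j2 => // j _ j2 /=; exact: h.
Qed.

Definition Inv A j := forall a b, gg A j <= a -> a < b -> b <= j ->
  (a = gg A j -> b < j -> (PP A a b).+1 <= pS A b.+1) /\
  (gg A j < a -> PP A a b <= pS A a.+1).

Definition Shape A j :=
  [/\ ~~ odd (pS A (gg A j).+1),
      forall i, (gg A j).+1 < i -> i <= j -> odd (pS A i) &
      forall i i', (gg A j).+1 < i -> i <= i' -> i' <= j -> pS A i' <= pS A i].

Section S3.
Variable A : seq nat.
Hypothesis hA : kupP A.
Hypothesis hasc : ascP A.

Lemma pS1 : pS A 1 = 0.
Proof. exact: PP01. Qed.

Lemma pS_pos x : 2 <= x -> x <= size A -> 1 <= pS A x.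
Proof. exact: PP_simple_pos. Qed.

Lemma L_G j : 2 <= j -> j <= size A -> pS A j = 1 -> gg A j.-1 = gg A j.
Proof. by move=> h1 h2; rewrite /pS pd_simple //; case: eqP. Qed.

Lemma L_R j : 2 <= j -> j <= size A -> 2 <= pS A j ->
  kup A j.-1 = kup A j /\ pS A j = (pS A (gg A j)).+2.
Proof.
move=> j2 js; rewrite /pS pd_simple //.
case: eqP => // hne _.
have gm := gg_mono hA (i:=j.-1) (j:=j) ltac:(lia) ltac:(lia) js.
have ha := hasc (j:=j.-1) ltac:(lia) ltac:(lia).
have k1 := kup_le hA (j:=j.-1) ltac:(lia).
have k2 := kup_le hA (j:=j) ltac:(lia).
have e : gg A j.-1 = (gg A j).-1.
  move: hne gm ha k1 k2; rewrite /gg; have -> : j.-1.+1 = j by lia. lia.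
split.
  move: e k1 k2 hne; rewrite /gg; lia.
by rewrite e.
Qed.

Lemma Inv_G j : 2 <= j -> j <= size A -> gg A j.-1 = gg A j -> Inv A j.-1 -> Inv A j.
Proof.
move=> j2 js hg IH a b ga ab bj.
have p1 : PP A (gg A j) j.-1 = 0.
  have := gg_lt hA (j:=j) ltac:(lia) => gl.
  rewrite pd_step //; [by rewrite hg eqxx | lia | lia | by rewrite hg].
have pj := pS_pos j2 js.
case: (ltnP b j) => hb.
- have [h1 h2] := IH a b ltac:(lia) ab ltac:(lia).
  split; last by rewrite -hg; apply: h2; lia.
  move=> ea _; case: (ltnP b j.-1) => hb2; first by apply: h1; [rewrite hg|].
  have -> : b = j.-1 by lia. by rewrite ea p1; have -> : j.-1.+1 = j by lia.
- have eb : b = j by lia. subst b; split=> // lt.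
  rewrite pd_step //; try lia. rewrite ifF; last by apply/negbTE; lia.
  case: (ltnP a j.-1) => ha.
  + have [h1 _] := IH (gg A j) a ltac:(lia) ltac:(lia) ltac:(lia).
    by apply: h1.
  + have ea : a = j.-1 by lia. subst a. rewrite p1.
    by have -> : j.-1.+1 = j by lia.
Qed.

Lemma Inv_R j v : v = kup A j -> 2 <= v -> v < j -> j <= size A ->
  (forall x, j - v <= x <= j -> kup A x = v) ->
  (forall x, j - v < x <= j -> pS A x = (pS A (x - v)).+2) ->
  Inv A (j - v) -> Inv A j.
Proof.
move=> ev v2 vj js hk hp IH a b ga ab bj.
have ggj : gg A j = j - v by rewrite /gg ev.
have ggg : gg A (j - v) = j - v - v by rewrite /gg hk //; lia.
rewrite ggj in ga *.
have vjv : v <= j - v.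
  have := kup_le hA (j := j - v) ltac:(lia); rewrite hk //; lia.
case: (ltnP (b - a) v) => hba; last first.
  split; lia.
have sh := PP_shift hA (N0 := j - v) (N := j) (v := v) hk ltac:(lia) js ga ab bj hba.
rewrite sh; split.
- move=> ea bj2.
  have [h1 _] := IH (a - v) (b - v) ltac:(rewrite ggg; lia) ltac:(lia) ltac:(lia).
  have := h1 ltac:(rewrite ggg; lia) ltac:(lia).
  rewrite (hp b.+1) //; last lia.
  have -> : b.+1 - v = (b - v).+1 by lia. lia.
- move=> lt.
  have [_ h2] := IH (a - v) (b - v) ltac:(rewrite ggg; lia) ltac:(lia) ltac:(lia).
  have := h2 ltac:(rewrite ggg; lia).
  rewrite (hp a.+1) //; last lia.
  have -> : a.+1 - v = (a - v).+1 by lia. lia.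
Qed.

Lemma WL j : 1 <= j -> j <= size A -> Shape A j -> Inv A j.
Proof.
elim/ltn_ind: j => j IHj j1 js [sh1 sh2 sh3].
have kj1 := kup_pos hA (j:=j) ltac:(lia).
have kjj := kup_le hA (j:=j) ltac:(lia).
case: (ltnP (kup A j) 2) => kj.
  move=> a b ga ab bj; rewrite /gg in ga *; split; lia.
have j2 : 2 <= j by lia.
have ggj : gg A j = j - kup A j by [].
have oj : odd (pS A j) by apply: sh2 => //; rewrite /gg; lia.
case: (eqVneq (pS A j) 1) => pj.
- have hg := L_G j2 js pj.
  apply: Inv_G => //.
  apply: IHj; try lia.
  split; rewrite hg //.
  + move=> i h1 h2; apply: sh2; lia.
  + move=> i i' h1 h2 h3; apply: sh3; lia.
- have pj3 : 3 <= pS A j.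
    have := pS_pos j2 js. move: oj pj; case: (pS A j) => [|[|[|k]]] //.
  set v := kup A j.
  have big : forall i, (gg A j).+1 < i -> i <= j -> 3 <= pS A i.
    move=> i h1 h2; have := sh3 i j h1 h2 (leqnn _); lia.
  have hk : forall k, k <= v -> kup A (j - k) = v.
    elim=> [|k IHk] hkv; first by rewrite subn0.
    have e1 := IHk ltac:(lia).
    set x := j - k.
    have x2 : 2 <= x.
      case: (ltnP x 2) => // hx.
      have : x = 1 by have := kup_pos hA (j:=x) ltac:(rewrite /x; lia); rewrite /x; lia.
      move=> ex1. move: e1; rewrite -/x ex1; case: hA => _ -> _. lia.
    have px : 2 <= pS A x.
      case: (ltnP (gg A j).+1 x) => hx.
      + have := big x hx ltac:(rewrite /x; lia); lia.
      + have ex : x = (gg A j).+1 by rewrite ggj /x; rewrite ggj in hx; lia.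
        have := pS_pos x2 ltac:(rewrite /x; lia).
        move: sh1; rewrite -ex.
        by case: (pS A x) => [|[|k']].
    have [l1 _] := L_R x2 ltac:(rewrite /x; lia) px.
    have -> : j - k.+1 = x.-1 by rewrite /x; lia.
    by rewrite l1.
  have gge : forall x, j - v <= x <= j -> gg A x = x - v.
    move=> x hx; rewrite /gg.
    have -> : x = j - (j - x) by lia. rewrite hk; last lia. done.
  have hp : forall x, j - v < x <= j -> pS A x = (pS A (x - v)).+2.
    move=> x hx.
    have x2 : 2 <= x.
      case: (ltnP x 2) => // hx2.
      have ex1 : x = 1 by lia.
      have := hk (j - x) ltac:(lia). have -> : j - (j - x) = x by lia.
      rewrite ex1; case: hA => _ -> _. lia.
    have px : 2 <= pS A x.
      case: (ltnP (gg A j).+1 x) => hx2.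
      + have := big x hx2 ltac:(lia); lia.
      + have ex : x = (gg A j).+1 by rewrite ggj; rewrite ggj in hx2; lia.
        have := pS_pos x2 ltac:(lia).
        move: sh1; rewrite -ex. by case: (pS A x) => [|[|k']].
    have [_ l2] := L_R x2 ltac:(lia) px.
    by rewrite l2 (gge x) //; lia.
  have vj : v < j.
    have := hk v (leqnn _). case: (ltnP v j) => // hvj.
    have -> : j - v = 0 by lia. rewrite kup0; case: hA => _ -> _. lia.
  have vjv : v <= j - v.
    have := kup_le hA (j := j - v) ltac:(lia); rewrite hk //; lia.
  apply: (Inv_R (v := v)) => //; try lia.
  + move=> x hx; have -> : x = j - (j - x) by lia. apply: hk; lia.
  + apply: IHj; try lia.
    have ggv : gg A (j - v) = j - v - v by rewrite gge; lia.
    split; rewrite ggv.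
    * have := hp (j - v).+1 ltac:(rewrite /v; lia).
      have -> : (j - v).+1 - v = (j - v - v).+1 by lia.
      move=> e; move: sh1; rewrite ggj -/v e /=. by rewrite negbK.
    * move=> i h1 h2.
      have := sh2 (i + v) ltac:(rewrite ggj; lia) ltac:(lia).
      rewrite hp; last lia. have -> : i + v - v = i by lia. by rewrite /= negbK.
    * move=> i i' h1 h2 h3.
      have := sh3 (i + v) (i' + v) ltac:(rewrite ggj; lia) ltac:(lia) ltac:(lia).
      rewrite (hp (i + v)); last lia. rewrite (hp (i' + v)); last lia.
      have -> : i + v - v = i by lia.
      have -> : i' + v - v = i' by lia. lia.
Qed.

End S3.

End Part3.
Import Part3.

Module Part4.

Definition win A j := [seq pS A i | i <- iota (gg A j).+1 (kup A j)].

Lemma nseqSr n (x : nat) : rcons (nseq n x) x = nseq n.+1 x.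
Proof. by elim: n => //= n ->. Qed.

Lemma kup_rcons_last A x : kup (rcons A x) (size A).+1 = x.
Proof. by rewrite /kup /= nth_rcons ltnn eqxx. Qed.

Lemma kup_rcons A x i : 0 < size A -> i <= size A -> kup (rcons A x) i = kup A i.
Proof. by move=> h1 h2; rewrite -cats1 kup_cat. Qed.

Lemma kupP_rcons A x : kupP A -> 2 <= x -> x <= (kup A (size A)).+1 -> kupP (rcons A x).
Proof.
case=> h1 h2 h3 x2 xl; split; rewrite ?size_rcons //.
  by rewrite kup_rcons //; lia.
move=> j j1 j2.
case: (ltnP j (size A)) => hj.
  rewrite !kup_rcons //; try lia. exact: h3.
have -> : j = size A by lia.
by rewrite kup_rcons_last kup_rcons //; lia.
Qed.

Lemma ascP_rcons A x : kupP A -> ascP A -> kup A (size A) <= x -> ascP (rcons A x).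
Proof.
case=> h1 _ _ ha hx j j1; rewrite size_rcons => j2.
case: (ltnP j (size A)) => hj.
  rewrite !kup_rcons //; try lia. exact: ha.
have -> : j = size A by lia.
by rewrite kup_rcons_last kup_rcons //; lia.
Qed.

Lemma kup_nseq A s v x : 0 < size A -> size A < x -> x <= size A + s -> kup (A ++ nseq s v) x = v.
Proof.
move=> h1 h2 h3; rewrite /kup nth_cat ifF; last lia.
rewrite nth_nseq ifT //; lia.
Qed.

Lemma cat_nseqS A s (v : nat) : A ++ nseq s.+1 v = rcons (A ++ nseq s v) v.
Proof. by rewrite -nseqSr rcons_cat. Qed.

Lemma kupP_nseq A s : kupP A -> 2 <= kup A (size A) -> kupP (A ++ nseq s (kup A (size A))).
Proof.
move=> hA hv; elim: s => [|s IH]; first by rewrite cats0.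
rewrite cat_nseqS; apply: kupP_rcons => //.
case: hA => h1 _ _.
case: s IH => [|s] IH; first by rewrite cats0.
rewrite size_cat size_nseq kup_nseq //; lia.
Qed.

Lemma ascP_nseq A s : kupP A -> ascP A -> 2 <= kup A (size A) ->
  ascP (A ++ nseq s (kup A (size A))).
Proof.
move=> hA ha hv; elim: s => [|s IH]; first by rewrite cats0.
rewrite cat_nseqS; apply: ascP_rcons => //; first exact: kupP_nseq.
case: hA => h1 _ _.
case: s IH => [|s] IH; first by rewrite cats0.
rewrite size_cat size_nseq kup_nseq //; lia.
Qed.

Lemma pS_cat A C i : 0 < size A -> i <= size A -> pS (A ++ C) i = pS A i.
Proof. by move=> h1 h2; rewrite /pS PP_cat. Qed.

Lemma win_G A : kupP A -> ascP A ->
  let A' := rcons A (kup A (size A)).+1 in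
  [/\ kupP A', ascP A' & win A' (size A') = rcons (win A (size A)) 1].
Proof.
move=> hA ha /=; set v := kup A (size A).
have hA' : kupP (rcons A v.+1) by apply: kupP_rcons => //; have := kup_pos hA (j := size A); case: hA => h1 _ _; lia.
split => //; first by apply: ascP_rcons.
case: (hA) => h1 _ _.
have vs : v <= size A by apply: kup_le => //; lia.
have v1 : 1 <= v by apply: kup_pos => //; lia.
rewrite /win size_rcons kup_rcons_last.
have -> : gg (rcons A v.+1) (size A).+1 = gg A (size A) by rewrite /gg kup_rcons_last.
rewrite (_ : iota (gg A (size A)).+1 v.+1 = iota (gg A (size A)).+1 v ++ [:: (gg A (size A)).+1 + v]); last by rewrite -[v.+1]addn1 iotaD.
rewrite map_cat /= cats1; congr rcons.
  apply/eq_in_map => i; rewrite mem_iota => hi.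
  rewrite -cats1 pS_cat //; rewrite /gg in hi; lia.
have -> : (gg A (size A)).+1 + v = (size A).+1 by rewrite /gg; lia.
rewrite /pS pd_simple //; last by rewrite size_rcons.
rewrite /= /gg kup_rcons_last kup_rcons // -/v.
have -> : (size A).+1 - v.+1 = size A - v by lia.
by rewrite eqxx.
Qed.

Lemma win_R A : kupP A -> ascP A -> 2 <= kup A (size A) ->
  let A' := A ++ nseq (kup A (size A)) (kup A (size A)) in
  [/\ kupP A', ascP A' & win A' (size A') = map (addn 2) (win A (size A))].
Proof.
move=> hA ha hv /=; set v := kup A (size A).
have hA' := kupP_nseq v hA hv.
split => //; first exact: ascP_nseq.
case: (hA) => h1 _ _.
have vs : v <= size A by apply: kup_le => //; lia.
rewrite /win size_cat size_nseq.
have kv : forall x, size A <= x <= size A + v -> kup (A ++ nseq v v) x = v.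
  move=> x hx; case: (ltnP (size A) x) => h; first by apply: kup_nseq; lia.
  have -> : x = size A by lia. by rewrite kup_cat.
rewrite kv; last lia.
have -> : gg (A ++ nseq v v) (size A + v) = size A by rewrite /gg kv; lia.
have -> : (size A).+1 = v + (gg A (size A)).+1 by rewrite /gg; lia.
rewrite iotaDl -!map_comp; apply/eq_in_map => i; rewrite mem_iota => hi /=.
rewrite /gg in hi.
rewrite /pS pd_simple //; try rewrite size_cat size_nseq; try lia.
have e1 : gg (A ++ nseq v v) (v + i).-1 = (v + i).-1 - v by rewrite /gg kv; lia.
have e2 : gg (A ++ nseq v v) (v + i) = i by rewrite /gg kv; lia.
rewrite e1 e2 ifF; last by apply/negbTE; lia.
have -> : (v + i).-1 - v = i.-1 by lia.
rewrite PP_cat //; lia.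
Qed.

Definition Target (cs : seq nat) := (head 1 cs).-1 :: cs.

Lemma sorted_geq_last cs c : sorted geq (rcons cs c) -> all (fun x => c <= x) cs.
Proof.
rewrite -rev_sorted rev_rcons /= => /(order_path_min (leT := leq)) h.
by rewrite -all_rev; apply: h; move=> ???; apply: leq_trans.
Qed.

Lemma sorted_geq_prefix cs c : sorted geq (rcons cs c) -> sorted geq cs.
Proof.
apply: subseq_sorted; first by move=> x y z h1 h2; apply: leq_trans h2 h1.
by rewrite -cats1 prefix_subseq.
Qed.

Lemma exist_win cs : sorted geq cs -> all odd cs ->
  exists A, [/\ kupP A, ascP A & win A (size A) = Target cs].
Proof.
move hN: (sumn cs + size cs) => N.
elim/ltn_ind: N cs hN => N IH cs hN hs ho.
case/lastP: cs hN hs ho => [|cs c] hN hs ho.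
  exists [:: 1]; split => //.
  - by split => // j j1 j2; move: j1 j2 => /=; lia.
  - by move=> j j1 j2; move: j1 j2 => /=; lia.
rewrite all_rcons in ho; case/andP: ho => oc ho.
have hs' := sorted_geq_prefix hs.
case: (eqVneq c 1) => ec.
- subst c.
  have [A [hA ha hw]] := IH (sumn cs + size cs) ltac:(move: hN; rewrite -cats1 sumn_cat size_cat /=; lia) cs erefl hs' ho.
  have [h1 h2 h3] := win_G hA ha.
  exists (rcons A (kup A (size A)).+1); split => //.
  rewrite h3 hw /Target; case: (cs) => //.
- have c3 : 3 <= c by move: oc ec; case: (c) => [|[|[|]]].
  have hall := sorted_geq_last hs.
  set cs2 := map (subn^~ 2) (rcons cs c).
  have hs2 : sorted geq cs2.
    apply: homo_sorted hs => x y; rewrite /geq /=; lia.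
  have ho2 : all odd cs2.
    rewrite /cs2 all_map; apply/allP => x; rewrite mem_rcons inE => /orP [/eqP->|hx] /=.
      by rewrite oddB; [rewrite oc | lia].
    have hx3 : 3 <= x by have := allP hall x hx; lia.
    by rewrite oddB; [rewrite (allP ho x hx) | lia].
  have hN2 : sumn cs2 + size cs2 < N.
    rewrite -hN /cs2 size_map.
    have : sumn (map (subn^~ 2) (rcons cs c)) + 2 <= sumn (rcons cs c).
      rewrite -!cats1 map_cat sumn_cat /= sumn_cat /=.
      suff : sumn (map (subn^~ 2) cs) <= sumn cs by lia.
      elim: (cs) => //= x xs IHx. lia.
    lia.
  have [A [hA ha hw]] := IH _ hN2 cs2 erefl hs2 ho2.
  have hv : 2 <= kup A (size A).
    have := congr1 size hw. rewrite /win size_map size_iota /Target /= /cs2 size_map size_rcons. lia.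
  have [h1 h2 h3] := win_R hA ha hv.
  eexists; split; [exact h1 | exact h2 |].
  rewrite h3 hw /Target /=; congr cons.
  + rewrite /cs2; case: (cs) hall => [|x xs] hall /=; first lia.
    have : c <= x by move: hall => /= /andP[]. lia.
  + rewrite /cs2 -map_comp map_id_in // => x; rewrite mem_rcons inE => /orP [/eqP->|hx] /=; first lia.
    have := allP hall x hx; lia.
Qed.

End Part4.
Import Part4.

Module Part5.

Lemma foldr_maxn_le s y : (forall x, x \in s -> x <= y) -> foldr maxn 0 s <= y.
Proof.
elim: s => //= x s IH h; rewrite geq_max h ?mem_head //=.
by apply: IH => z hz; apply: h; rewrite inE hz orbT.
Qed.

Lemma foldr_maxn_ge s x : x \in s -> x <= foldr maxn 0 s.
Proof.
elim: s => //= y s IH; rewrite inE => /orP [/eqP->|h]; first by rewrite leq_maxl.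
by rewrite leq_max IH ?orbT.
Qed.

Lemma mem_indec B b l : ((b, l) \in indec B) = [&& 1 <= b, b <= size B, 1 <= l & l <= kup B b].
Proof.
apply/allpairsPdep/idP.
  case=> x [y [hx hy [-> ->]]]; move: hx hy; rewrite !mem_iota; lia.
move=> h; exists b, l; split => //; rewrite mem_iota; lia.
Qed.

Lemma natE (x : nat) : exists y : nat, x = y.
Proof. by exists x. Qed.

Definition closedAt B d := d_closed B d (gg B (size B)).+2.

Section S5.
Variable B : seq nat.
Variable d : nat.
Local Notation N := (size B).
Local Notation v := (kup B (size B)).
Local Notation q := (gg B (size B)).

Lemma closed_first : 1 <= v -> v <= N -> d_closed B d q.+1.
Proof.
move=> v1 vN; apply/orP; left; apply/hasP; exists N.
  rewrite mem_iota; lia.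
rewrite /gg; apply/andP; split; [apply/eqP|]; lia.
Qed.

Lemma Ulen_def : U_len B d =
  foldr maxn 0 [seq k <- iota 0 v.+1 | all (d_closed B d) (iota q.+1 k)].
Proof. by rewrite /U_len /n_of /q /gg addn1. Qed.

Lemma Ulen_bounds : 1 <= v -> v <= N -> 1 <= U_len B d <= v.
Proof.
move=> v1 vN; rewrite Ulen_def; apply/andP; split.
  apply: foldr_maxn_ge; rewrite mem_filter mem_iota /= closed_first //; lia.
by apply: foldr_maxn_le => x; rewrite mem_filter mem_iota => /andP[_]; lia.
Qed.

Lemma Ulen_1 : 2 <= v -> v <= N -> ~~ d_closed B d q.+2 -> U_len B d = 1.
Proof.
move=> v2 vN hn; apply/eqP; rewrite eqn_leq; apply/andP; split.
  rewrite Ulen_def; apply: foldr_maxn_le => x; rewrite mem_filter => /andP[hx _].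
  case: (leqP x 1) => // x2; move: hx.
  have -> : x = 2 + (x - 2) by lia.
  rewrite iotaD all_cat => /andP[/= /and3P[_ h _] _]; by rewrite h in hn.
by have /andP[] := Ulen_bounds ltac:(lia) vN.
Qed.

Lemma Ulen_2 : 2 <= v -> v <= N -> d_closed B d q.+2 -> 2 <= U_len B d.
Proof.
move=> v2 vN hc; rewrite Ulen_def; apply: foldr_maxn_ge.
rewrite mem_filter mem_iota /= closed_first ?hc //; lia.
Qed.

Lemma Ed_shape : 1 <= v -> v <= N ->
  Ed d B = B \/ exists x, [/\ 2 <= x, x <= v & Ed d B = rcons B x].
Proof.
move=> v1 vN; have /andP[u1 uv] := Ulen_bounds v1 vN.
rewrite /Ed /cliff_len /n_of.
case: ifP => h; [by left | right].
exists (v - U_len B d).+1; split => //; lia.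
Qed.

Lemma Ed_notclosed : 2 <= v -> v <= N -> ~~ closedAt B d ->
  Ed d B = rcons B v /\ cliff_len B d != 0.
Proof.
move=> v2 vN hn; rewrite /Ed /cliff_len /n_of Ulen_1 //.
rewrite ifF; last by apply/negbTE; lia.
split => //; [congr rcons; lia | lia].
Qed.

Lemma Ed_closed : 2 <= v -> v <= N -> closedAt B d ->
  (Ed d B = B /\ cliff_len B d = 0) \/
  exists x, [/\ 2 <= x, x < v & Ed d B = rcons B x].
Proof.
move=> v2 vN hc; have u2 := Ulen_2 v2 vN hc.
have /andP[u1 uv] := Ulen_bounds ltac:(lia) vN.
rewrite /Ed /cliff_len /n_of.
case: ifP => h; [left; split => //; exact/eqP | right].
exists (v - U_len B d).+1; split => //; lia.
Qed.

Hypothesis hB : kupP B.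

Lemma closedAtP : 2 <= v ->
  closedAt B d <-> exists b, [/\ q.+2 <= b, b <= N & d <= PP B q.+1 b].
Proof.
move=> v2.
have N1 : 1 <= N by case: hB.
have vN : v <= N by apply: (kup_le hB); lia.
split.
- case/orP.
    case/hasP => j0; have [j ->] : exists j : nat, j0 = j by exists j0.
    rewrite mem_iota => hj /andP[/eqP e _].
    have kj := kup_le hB (j:=j) ltac:(lia).
    have := gg_mono hB (i:=j) (j:=N) ltac:(lia) ltac:(lia) (leqnn _).
    rewrite /gg in e *; lia.
  case/hasP => [[b l]]; rewrite mem_indec => /and4P[b1 bN l1 lk] /andP[/eqP e hd] /=.
  have kb := kup_le hB (j:=b) ltac:(lia).
  exists b; split; [simpl in e; lia | exact bN |].
  by rewrite /PP; have -> : b - q.+1 = l by simpl in e; lia.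
- case=> b [h1 h2 h3]; apply/orP; right; apply/hasP.
  exists (b, b - q.+1).
    rewrite mem_indec; apply/and4P; split; try lia.
    have := gg_mono hB (i:=b) (j:=N) ltac:(lia) h2 (leqnn _).
    rewrite /gg; lia.
  rewrite /=; apply/andP; split; [apply/eqP; lia | exact h3].
Qed.

End S5.

End Part5.
Import Part5.

Module Part6.

Definition Bs (B : seq nat) s := B ++ nseq s (kup B (size B)).

Section S6.
Variable B : seq nat.
Variable d : nat.
Hypothesis hB : kupP B.
Local Notation N := (size B).
Local Notation v := (kup B (size B)).
Hypothesis v2 : 2 <= v.

Lemma N1 : 1 <= N. Proof. by case: hB. Qed.
Lemma vN : v <= N. Proof. apply: (kup_le hB); have := N1; lia. Qed.

Lemma Bs_kupP s : kupP (Bs B s).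
Proof. exact: kupP_nseq. Qed.

Lemma Bs_size s : size (Bs B s) = N + s.
Proof. by rewrite size_cat size_nseq. Qed.

Lemma Bs_kup s x : N <= x <= N + s -> kup (Bs B s) x = v.
Proof.
move=> hx; case: (ltnP N x) => h; first by apply: kup_nseq; have := N1; lia.
have -> : x = N by lia. rewrite kup_cat //; have := N1; lia.
Qed.

Lemma Bs_last s : kup (Bs B s) (size (Bs B s)) = v.
Proof. by rewrite Bs_size Bs_kup //; lia. Qed.

Lemma Bs_gg s : gg (Bs B s) (size (Bs B s)) = N + s - v.
Proof. by rewrite /gg Bs_last Bs_size. Qed.

Lemma Bs_S s : Bs B s.+1 = rcons (Bs B s) v.
Proof. by rewrite /Bs cat_nseqS. Qed.

Lemma plateau s : (forall s', s' < s -> ~~ closedAt (Bs B s') d) ->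
  iter s (Ed d) B = Bs B s.
Proof.
elim: s => [|s IH] h; first by rewrite /Bs cats0.
rewrite iterS IH; last by move=> s' hs'; apply: h; lia.
have hn := h s (ltnSn _).
have [e _] := Ed_notclosed (B := Bs B s) (d := d) ltac:(rewrite Bs_last //)
  ltac:(rewrite Bs_last Bs_size; have := vN; lia) hn.
by rewrite e Bs_last Bs_S.
Qed.

Lemma plateau_cliff s : ~~ closedAt (Bs B s) d -> cliff_len (Bs B s) d != 0.
Proof.
move=> hn.
by have [_ e] := Ed_notclosed (B := Bs B s) (d := d) ltac:(rewrite Bs_last //)
  ltac:(rewrite Bs_last Bs_size; have := vN; lia) hn.
Qed.

Lemma Bs_shift s a b : N <= a -> a < b -> b <= N + s -> b - a < v ->
  PP (Bs B s) a b = (PP (Bs B s) (a - v) (b - v)).+2.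
Proof.
move=> h1 h2 h3 h4; apply: (PP_shift (Bs_kupP s) (N0 := N) (N := N + s)) => //.
- by move=> x hx; apply: Bs_kup.
- exact: N1.
- by rewrite Bs_size.
Qed.

Lemma Bs_lower s k a : N + k * v <= a + v -> a < N + s -> 2 * k <= PP (Bs B s) a a.+1.
Proof.
elim: k a => [|k IH] a h1 h2; first lia.
have hvN := vN.
rewrite Bs_shift //; try lia.
have := IH (a - v) ltac:(lia) ltac:(lia).
have -> : a.+1 - v = (a - v).+1 by lia. lia.
Qed.

Lemma eventually_closed : closedAt (Bs B (d * v)) d.
Proof.
apply/(closedAtP (B := Bs B (d * v)) d (Bs_kupP (d * v)) _).2; first by rewrite Bs_last.
rewrite Bs_gg Bs_size.
have hvN := vN.
exists (N + d * v - v).+2; split => //; try lia.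
have := Bs_lower (s := d * v) (k := d) (a := (N + d * v - v).+1) ltac:(lia) ltac:(lia).
lia.
Qed.

End S6.

Lemma termination d B : kupP B -> exists t, cliff_len (iter t (Ed d) B) d = 0.
Proof.
move hv: (kup B (size B)) => v.
elim/ltn_ind: v B hv => v IH B hv hB.
have N1 : 1 <= size B by case: hB.
have vN : v <= size B by rewrite -hv; apply: (kup_le hB); lia.
have v1 : 1 <= v by rewrite -hv; apply: (kup_pos hB); lia.
case: (ltnP v 2) => v2.
  exists 0 => /=; rewrite /cliff_len /n_of hv.
  have /andP[] := Ulen_bounds d (B := B) ltac:(rewrite hv //) ltac:(rewrite hv //); rewrite hv; lia.
have hv2 : 2 <= kup B (size B) by rewrite hv.
have ex : exists s, closedAt (Bs B s) d by exists (d * kup B (size B)); exact: eventually_closed.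
case: (ex_minnP ex) => s hs hmin.
have hpl : iter s (Ed d) B = Bs B s.
  apply: plateau => // s' hs'; apply/negP => hc; have := hmin s' hc; lia.
have hk := Bs_kupP hB hv2 s.
have [[e c0]|[x [x2 xv e]]] := Ed_closed (B := Bs B s) (d := d)
   ltac:(rewrite Bs_last //) ltac:(rewrite Bs_last // Bs_size; lia) hs.
  by exists s; rewrite hpl.
rewrite Bs_last // hv in xv.
have hk' : kupP (rcons (Bs B s) x) by apply: kupP_rcons => //; rewrite Bs_last // hv; lia.
have [t ht] := IH x xv (rcons (Bs B s) x) ltac:(by rewrite size_rcons kup_rcons_last) hk'.
exists (t + s.+1); rewrite iterD iterS hpl e; exact ht.
Qed.

End Part6.
Import Part6.

Module Part7.

Lemma charM_cat A C b l : 0 < size A -> b <= size A -> l <= b ->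
  charM (A ++ C) b l = charM A b l.
Proof.
move=> h1 h2 h3; rewrite /charM; apply/eq_in_map => i; rewrite mem_iota => hi.
by rewrite !pd_cat //; lia.
Qed.

Lemma sumn_count (T : Type) (P : pred T) s : sumn [seq (P x : nat) | x <- s] = count P s.
Proof. by elim: s => //= x s ->. Qed.

Lemma kup_last C : kup C (size C) = last 0 C.
Proof.
case: C => // x s; by rewrite /kup -nth_last.
Qed.

Lemma cnt0 (X : Type) (s : seq X) : count xpred0 s = 0.
Proof. by elim: s. Qed.
Lemma cntT (X : Type) (s : seq X) : count xpredT s = size s.
Proof. by elim: s => //= _ s ->. Qed.

Section S7.
Variable A : seq nat.
Variable d : nat.
Hypothesis hA : kupP A.
Local Notation N := (size A).
Local Notation h := (kup A (size A)).
Hypothesis h2 : 2 <= h.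
Hypothesis hlt : forall x, 1 <= x -> x < N -> kup A x < h.
Hypothesis hG : kup A N.-1 = h.-1.
Variable T : nat.
Hypothesis hT1 : forall s, s < T -> ~~ closedAt (Bs A s) d.
Hypothesis hT2 : closedAt (Bs A T) d.

Lemma good_iter k : T <= k -> exists w,
  [/\ iter k (Ed d) A = Bs A T ++ w, all (fun x => x < h) w & kupP (Bs A T ++ w)].
Proof.
have hpl := plateau hA h2 hT1.
have hk := Bs_kupP hA h2 T.
elim: k => [|k IH] hk0.
  exists [::]; have -> : T = 0 by lia. by rewrite cats0 /= /Bs cats0.
case: (ltnP k T) => hkT.
  have -> : k.+1 = T by lia. exists [::]; rewrite cats0 hpl; split => //.
have [w [e hw hkw]] := IH hkT.
have N1 : 1 <= N by case: hA.
rewrite iterS e.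
case: w e hw hkw => [|y w] e hw hkw.
  rewrite cats0.
  have [[e2 _]|[x [x2 xv e2]]] := Ed_closed (B := Bs A T) (d := d)
     ltac:(rewrite Bs_last //) ltac:(rewrite Bs_last // Bs_size; have := vN hA; lia) hT2.
    by exists [::]; rewrite cats0 e2.
  rewrite Bs_last // in xv.
  exists [:: x]; rewrite e2 cats1; split => //=; first by rewrite xv.
  apply: kupP_rcons => //; rewrite Bs_last //; lia.
have hlast : kup (Bs A T ++ y :: w) (size (Bs A T ++ y :: w)) < h.
  rewrite kup_last last_cat /=.
  have := mem_last y w; move/allP: hw => hw /hw; done.
have hl1 : 1 <= kup (Bs A T ++ y :: w) (size (Bs A T ++ y :: w)).
  apply: (kup_pos hkw); case: hkw => s1 _ _; lia.
have hl2 : kup (Bs A T ++ y :: w) (size (Bs A T ++ y :: w)) <= size (Bs A T ++ y :: w).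
  apply: (kup_le hkw); case: hkw => s1 _ _; lia.
have [e2|[x [x2 xv e2]]] := Ed_shape d hl1 hl2.
  by exists (y :: w); rewrite e2.
exists (rcons (y :: w) x); rewrite e2 -rcons_cat; split => //.
  rewrite all_rcons hw andbT; lia.
apply: kupP_rcons => //; lia.
Qed.

Lemma closure_exists : exists H, is_closure d A H.
Proof.
have [t ht] := termination d hA.
by exists (iter t (Ed d) A); exists t.
Qed.

Lemma closure_shape H : is_closure d A H -> exists w,
  [/\ H = Bs A T ++ w, all (fun x => x < h) w & kupP (Bs A T ++ w)].
Proof.
case=> k [-> hc].
case: (ltnP k T) => hk.
  have hpl := plateau hA h2 (s := k) (d := d) ltac:(move=> s' hs'; apply: hT1; lia).
  have := plateau_cliff hA h2 (hT1 hk); rewrite -hpl hc. done.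
exact: good_iter.
Qed.

Section H.
Variable w : seq nat.
Hypothesis hw : all (fun x => x < h) w.
Hypothesis hkw : kupP (Bs A T ++ w).
Local Notation H := (Bs A T ++ w).

Lemma N1' : 1 <= N. Proof. by case: hA. Qed.

Lemma sizeH : size H = N + T + size w.
Proof. by rewrite size_cat Bs_size. Qed.

Lemma kupH_A x : x <= N -> kup H x = kup A x.
Proof. move=> hx; rewrite -catA kup_cat //; exact: N1'. Qed.

Lemma kupH_B x : N <= x <= N + T -> kup H x = h.
Proof.
move=> hx; have n1 := N1'.
rewrite kup_cat; [exact: Bs_kup | rewrite Bs_size; lia | rewrite Bs_size; lia].
Qed.

Lemma kupH_w x : N + T < x <= size H -> kup H x < h.
Proof.
rewrite sizeH => hx; rewrite /kup nth_cat Bs_size ifF; last lia.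
have hi : (x.-1 - (N + T)) < size w by lia.
by move/allP: hw => /(_ _ (mem_nth 0 hi)).
Qed.

Lemma kupH_le x : 1 <= x <= size H -> kup H x <= h.
Proof.
move=> hx; case: (ltnP N x) => h1.
  case: (leqP x (N + T)) => h3; first by rewrite kupH_B //; lia.
  have := kupH_w (x := x) ltac:(lia); lia.
rewrite kupH_A //; case: (ltnP x N) => h4; last by have -> : x = N by lia.
have := hlt (x := x) ltac:(lia) h4; lia.
Qed.

Lemma kupH_eq x : 1 <= x <= size H -> (kup H x == h) = (N <= x <= N + T).
Proof.
move=> hx.
case: (boolP (N <= x <= N + T)) => hb; first by rewrite kupH_B ?eqxx.
apply/negbTE; case: (ltnP x N) => h1.
  rewrite kupH_A; last lia. have := hlt (x := x) ltac:(lia) h1. lia.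
have := kupH_w (x := x) ltac:(lia). lia.
Qed.

Lemma heightH : height H = h.
Proof.
apply/eqP; rewrite eqn_leq; apply/andP; split.
  apply: foldr_maxn_le => x /mapP [[b l]]; rewrite mem_indec => /and4P[b1 bs l1 lk] -> /=.
  have := kupH_le (x := b) ltac:(lia); lia.
apply: foldr_maxn_ge; apply/mapP; exists (N, h) => //.
rewrite mem_indec kupH_B; last lia.
rewrite sizeH; have := N1'; lia.
Qed.

Lemma mem_summits b l : ((b, l) \in summits H) = [&& l == h, N <= b & b <= N + T].
Proof.
rewrite /summits mem_filter heightH mem_indec /=.
case: eqP => //= ->.
apply/idP/idP.
  case/and4P => b1 bs _ hb.
  have := kupH_le (x := b) ltac:(lia). rewrite -(kupH_eq (x := b)) //; last lia.
  move=> hl; apply/eqP; lia.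
move=> /andP[h3 h4]; rewrite kupH_B; last lia.
rewrite sizeH; have := N1'; lia.
Qed.

Lemma num_summitsH : num_summits H = T + 1.
Proof.
rewrite /num_summits /summits size_filter /indec /allpairs_dep count_flatten -map_comp.
rewrite heightH.
have -> : [seq (count (fun m : nat * nat => m.2 == h) \o
      (fun x => [seq (x, y) | y <- iota 1 (kup H x)])) i | i <- iota 1 (size H)] =
    [seq ((fun b => N <= b <= N + T) b : nat) | b <- iota 1 (size H)].
  apply/eq_in_map => b; rewrite mem_iota => hb /=.
  rewrite count_map -(kupH_eq (x := b)); last lia.
  have -> : count (preim (pair b) (fun m : nat * nat => m.2 == h)) (iota 1 (kup H b)) =
     count (pred1 h) (iota 1 (kup H b)) by apply: eq_count => l.
  rewrite count_uniq_mem ?iota_uniq // mem_iota.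
  have := kupH_le (x := b) ltac:(lia). lia.
rewrite sumn_count sizeH.
have -> : N + T + size w = (N.-1 + (T + 1)) + size w by have := N1'; lia.
rewrite iotaD iotaD !count_cat.
rewrite (@eq_in_count _ _ (fun _ => false) (iota 1 N.-1)); last first.
  by move=> x; rewrite mem_iota /=; lia.
rewrite (@eq_in_count _ _ (fun _ => true) (iota (1 + N.-1) (T + 1))); last first.
  by move=> x; rewrite mem_iota /=; have := N1'; lia.
rewrite (@eq_in_count _ _ (fun _ => false) (iota _ (size w))); last first.
  by move=> x; rewrite mem_iota /=; have := N1'; lia.
rewrite !cnt0 cntT size_iota; lia.
Qed.

Lemma first_summitH : first_summit_char H (charM A N h).
Proof.
split.
  exists N, h; rewrite /first_summit mem_summits eqxx leqnn leq_addr /=.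
  rewrite /rad_projective /projective kupH_A; last lia. by rewrite hG eqxx orbT.
move=> b l; rewrite /first_summit mem_summits => /andP[/and3P[/eqP el h3 h4]].
rewrite /rad_projective /projective el.
have -> : (h == 1) = false by lia.
case: (ltnP N b) => hb.
  rewrite kupH_B; last lia. lia.
have -> : b = N by lia.
have n1 := N1'. have hN := kup_le hA (j := N) ltac:(lia).
by rewrite -catA charM_cat.
Qed.

Lemma last_summitH : last_summit_char H (charM (Bs A T) (N + T) h).
Proof.
split.
  exists (N + T), h; rewrite /last_summit mem_summits eqxx leq_addr leqnn /=.
  rewrite /top_quot_injective /Defs.injective sizeH.
  case: (eqVneq w [::]) => ew.
    by rewrite ew addn0 eqxx orbT.
  have sw : 1 <= size w by case: (w) ew.
  apply/orP; right; apply/orP; right.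
  have := kupH_w (x := (N + T).+1) ltac:(rewrite sizeH /=; lia). lia.
move=> b l; rewrite /last_summit mem_summits => /andP[/and3P[/eqP el h3 h4]].
rewrite /top_quot_injective /Defs.injective el.
have -> : (h == 1) = false by lia.
case: (ltnP b (N + T)) => hb.
  rewrite sizeH kupH_B; last lia.
  have -> : (b == N + T + size w) = false by lia. lia.
have -> : b = N + T by lia.
have n1 := N1'. have hN := kup_le hA (j := N) ltac:(lia).
rewrite charM_cat //; rewrite ?Bs_size; lia.
Qed.

End H.
End S7.

End Part7.
Import Part7.

Module Part8.

Definition f0 (s : nat) := if odd s then s else 0.

Lemma pd_proj A b : 1 <= b -> pd A b (kup A b) = 0.
Proof. by case: b => // b _; rewrite /pd /= leqnn. Qed.

Lemma pd_pS A i : 1 <= i -> pd A i 1 = pS A i.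
Proof. by move=> hi; rewrite /pS /PP; have -> : i - i.-1 = 1 by lia. Qed.

Lemma charM_win A b : kupP A -> 1 <= b -> b <= size A ->
  charM A b (kup A b) = map f0 (win A b).
Proof.
move=> hA b1 bs; rewrite /charM /win -map_comp pd_proj //.
have -> : b - kup A b + 1 = (gg A b).+1 by rewrite /gg addn1.
apply/eq_in_map => i; rewrite mem_iota => hi /=.
by rewrite pd_pS //; lia.
Qed.

Lemma ascP_sorted A : kupP A -> ascP A -> sorted leq A.
Proof.
move=> hA ha; apply/(sortedP 0) => i hi.
have := ha i.+1 ltac:(lia) ltac:(lia). by rewrite /kup.
Qed.

Lemma ascP_mono A : ascP A -> forall x y, 1 <= x -> x <= y -> y <= size A -> kup A x <= kup A y.
Proof.
move=> ha x y x1; elim: y => [|y IH] xy ys; first lia.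
case: (eqVneq x y.+1) => [->//|ne].
have := IH ltac:(lia) ltac:(lia). have := ha y ltac:(lia) ltac:(lia). lia.
Qed.

Lemma mem_nth_nat (s : seq nat) n : n < size s -> nth 0 s n \in s.
Proof. exact: mem_nth. Qed.

Lemma sorted_geq_nth (s : seq nat) i j : sorted geq s -> i <= j -> j < size s ->
  nth 0 s j <= nth 0 s i.
Proof.
move=> hs ij js.
have tr : transitive geq by move=> x y z /= h5 h6; apply: leq_trans h6 h5.
have rf : reflexive geq by move=> x /=.
have := sorted_leq_nth tr rf 0 hs.
move=> /(_ i j); rewrite !inE; apply => //; lia.
Qed.

Section S8.
Variable A : seq nat.
Variable cs : seq nat.
Hypothesis hA : kupP A.
Hypothesis ha : ascP A.
Hypothesis hs : sorted geq cs.
Hypothesis ho : all odd cs.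
Hypothesis hz : charM A (size A) (kup A (size A)) = 0 :: rcons cs 1.
Local Notation N := (size A).
Local Notation h := (kup A (size A)).
Local Notation m := (gg A (size A)).

Lemma N1 : 1 <= N. Proof. by case: hA. Qed.

Lemma hN : h <= N. Proof. apply: (kup_le hA); have := N1; lia. Qed.

Lemma h_eq : h = size cs + 2.
Proof.
have := congr1 size hz; rewrite /charM size_map size_iota /= size_rcons. lia.
Qed.

Lemma win_eq : map f0 (win A N) = 0 :: rcons cs 1.
Proof. by rewrite -charM_win // ?hz //; [exact: N1]. Qed.

Lemma nth_win k : k < h -> nth 0 (0 :: rcons cs 1) k = f0 (pS A (m.+1 + k)).
Proof.
move=> hk; rewrite -win_eq /win (nth_map 0); last by rewrite size_map size_iota.
by rewrite (nth_map 0) ?size_iota // nth_iota.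
Qed.

Lemma pS_m1 : ~~ odd (pS A m.+1).
Proof.
have := nth_win (k := 0) ltac:(rewrite h_eq; lia).
rewrite addn0 /= /f0; case: ifP => // ho1 e.
by move: ho1; rewrite -e.
Qed.

Lemma pS_k k : k < size cs -> pS A (m.+2 + k) = nth 0 cs k.
Proof.
move=> hk; have := nth_win (k := k.+1) ltac:(rewrite h_eq; lia).
rewrite /= nth_rcons hk addSnnS.
have ok : odd (nth 0 cs k) by apply: (allP ho); rewrite mem_nth_nat.
rewrite /f0; case: ifP => _ e.
  by rewrite e; congr pS; lia.
by move: ok; rewrite e.
Qed.

Lemma pS_N : pS A N = 1.
Proof.
have := nth_win (k := (size cs).+1) ltac:(rewrite h_eq; lia).
rewrite /= nth_rcons ltnn eqxx.
have -> : m.+1 + (size cs).+1 = N by have := hN; rewrite /gg h_eq; lia.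
by rewrite /f0; case: ifP.
Qed.

Lemma N2 : 2 <= N. Proof. have := hN; rewrite h_eq; lia. Qed.

Lemma gg_N1 : gg A N.-1 = m.
Proof. apply: L_G => //; [exact: N2 | exact: pS_N]. Qed.

Lemma hG : kup A N.-1 = h.-1.
Proof.
have := gg_N1; have := kup_le hA (j := N.-1) ltac:(have := N2; lia).
have := hN; rewrite /gg; have := N2; lia.
Qed.

Lemma hlt x : 1 <= x -> x < N -> kup A x < h.
Proof.
move=> x1 xN; have := ascP_mono ha x1 (y := N.-1) ltac:(lia) ltac:(lia).
rewrite hG; have := hN; rewrite h_eq; lia.
Qed.

Lemma h2 : 2 <= h. Proof. rewrite h_eq; lia. Qed.

Lemma invN : Inv A N.-1.
Proof.
have n2 := N2.
apply: WL => //; try lia.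
have hm : m.+2 + size cs = N.
  have := hN; rewrite /gg h_eq; lia.
split; rewrite gg_N1.
- exact: pS_m1.
- move=> i h1 h3.
  have -> : i = m.+2 + (i - m.+2) by lia.
  rewrite pS_k; last lia.
  by apply: (allP ho); rewrite mem_nth_nat //; lia.
- move=> i i' h1 h3 h4.
  have -> : i = m.+2 + (i - m.+2) by lia.
  have -> : i' = m.+2 + (i' - m.+2) by lia.
  rewrite !pS_k; try lia.
  apply: sorted_geq_nth => //; lia.

Qed.

Lemma pS_le_c1 i : m.+2 <= i -> i <= N.-1 -> pS A i <= head 0 cs.
Proof.
move=> h1 h3.
have hm : m.+2 + size cs = N by have := hN; rewrite /gg h_eq; lia.
have -> : i = m.+2 + (i - m.+2) by lia.
rewrite pS_k; last lia.
case: (cs) hs hm => [|c cs'] hs' hm'; first by rewrite nth_nil.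
have key := sorted_geq_nth (i := 0) (j := i - m.+2) hs' ltac:(lia) ltac:(lia).
exact: key.
Qed.

End S8.

End Part8.
Import Part8.

Module Part9.

Lemma shiftk B s k a b : kupP B -> 2 <= kup B (size B) ->
  size B + k * kup B (size B) <= a + kup B (size B) -> a < b -> b <= size B + s ->
  b - a < kup B (size B) ->
  PP (Bs B s) a b = 2 * k + PP (Bs B s) (a - k * kup B (size B)) (b - k * kup B (size B)).
Proof.
move=> hB v2; set v := kup B (size B).
elim: k a b => [|k IH] a b h1 h2 h3 h4; first by rewrite !mul0n !subn0.
have vN : v <= size B by apply: (kup_le hB); case: hB => ? _ _; lia.
rewrite Bs_shift //; try lia.
rewrite IH; try lia.
have -> : a - v - k * v = a - k.+1 * v by rewrite mulSn; lia.
have -> : b - v - k * v = b - k.+1 * v by rewrite mulSn; lia.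
lia.
Qed.

Lemma PP_Bs B s a b : kupP B -> b <= size B -> PP (Bs B s) a b = PP B a b.
Proof. by move=> hB hb; rewrite /Bs PP_cat //; case: hB. Qed.

Section S9.
Variable A : seq nat.
Variable cs : seq nat.
Variable d : nat.
Hypothesis hA : kupP A.
Hypothesis ha : ascP A.
Hypothesis hs : sorted geq cs.
Hypothesis ho : all odd cs.
Hypothesis hz : charM A (size A) (kup A (size A)) = 0 :: rcons cs 1.
Local Notation N := (size A).
Local Notation h := (kup A (size A)).
Local Notation m := (gg A (size A)).
Local Notation c1 := (head 0 cs).
Hypothesis hcs : 0 < size cs.

Let hN1 := hN hA hs ho.
Let N2' := N2 hA hs ho hz.
Let gg_N1' := gg_N1 hA hs ho hz.
Let h2'' := h2 hs ho hz.
Let invN' := invN hA ha hs ho hz.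
Let pS_le' := pS_le_c1 hA hs ho hz.

Lemma c1_pos : 1 <= c1.
Proof.
case: (cs) ho hcs => // c cs' /= /andP[oc _] _; case: (c) oc => //.
Qed.

Lemma mN : m + h = N.
Proof. have := hN1; rewrite /gg; lia. Qed.

Lemma h2' : 2 <= h. Proof. exact: h2''. Qed.

Lemma B2 s b : m < b -> b <= N.-1 -> PP (Bs A s) m b <= c1 - 1.
Proof.
move=> h1 h3.
have n2 := N2'. have g1 := gg_N1'. have e := mN.
rewrite PP_Bs //; last lia.
case: (ltnP b N.-1) => hb.
  have [k1 _] := invN' (a := m) (b := b) ltac:(rewrite g1; lia) h1 ltac:(lia).
  have := k1 ltac:(by rewrite g1) hb.
  have := pS_le' (i := b.+1) ltac:(lia) ltac:(lia). lia.
have -> : b = N.-1 by lia.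
rewrite pd_step //; try lia; try (rewrite g1; lia).
by rewrite g1 eqxx.
Qed.

Lemma B1 s a b : m < a -> a <= N.-1 -> a < b -> b - a < h -> b <= N + s ->
  PP (Bs A s) a b <= c1.+1.
Proof.
move=> h1 h3 h4 h5 h6.
have n2 := N2'. have g1 := gg_N1'. have e := mN.
have c1p := c1_pos.
case: (ltnP b N) => hb.
  rewrite PP_Bs //; last lia.
  have [_ k2] := invN' (a := a) (b := b) ltac:(rewrite g1; lia) h4 ltac:(lia).
  have := k2 ltac:(rewrite g1; lia).
  have := pS_le' (i := a.+1) ltac:(lia) ltac:(lia). lia.
case: (eqVneq b N) => ebN.
  subst b. rewrite PP_Bs // pd_step //; try lia.
  rewrite ifF; last by apply/negbTE; lia.
  case: (ltnP a N.-1) => ha2.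
    have [k1 _] := invN' (a := m) (b := a) ltac:(rewrite g1; lia) h1 ltac:(lia).
    have := k1 ltac:(by rewrite g1) ha2.
    have := pS_le' (i := a.+1) ltac:(lia) ltac:(lia). lia.
  have -> : a = N.-1 by lia.
  rewrite pd_step //; try lia; try (rewrite g1; lia).
  by rewrite g1 eqxx.
have hk : kup (Bs A s) b = h by apply: (Bs_kup hA h2'); lia.
rewrite pd_step //; try (rewrite /gg hk; lia); last by rewrite Bs_size; lia.
rewrite ifF; last by apply/negbTE; rewrite /gg hk; lia.
rewrite /gg hk PP_Bs //; last lia.
have [_ k2] := invN' (a := b - h) (b := a) ltac:(rewrite g1; lia) ltac:(lia) ltac:(lia).
have := k2 ltac:(rewrite g1; lia).
have := pS_le' (i := (b - h).+1) ltac:(lia) ltac:(lia). lia.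
exact: Bs_kupP hA h2' s.
Qed.

Variable t : nat.
Hypothesis hd : d = t.*2 + c1.

Lemma upper s b : s < h * t -> (gg (Bs A s) (size (Bs A s))).+2 <= b -> b <= size (Bs A s) ->
  PP (Bs A s) (gg (Bs A s) (size (Bs A s))).+1 b < d.
Proof.
move=> hst; rewrite (Bs_gg hA h2') Bs_size => hb1 hb2.
have e := mN. have hh := h2'.
set a := (N + s - h).+1.
have ea : a = m + s.+1 by rewrite /a; lia.
set k := s.+1 %/ h. set r := s.+1 %% h.
have hsr : s.+1 = k * h + r by rewrite /k /r -divn_eq.
have rh : r < h by rewrite /r ltn_pmod; lia.
have kt : k <= t.
  have : k * h <= t * h by rewrite mulnC in hst; lia.
  by rewrite leq_pmul2r; lia.
rewrite (shiftk (k := k)) //; try lia.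
set K := k * h in hsr kt *.
have -> : a - K = m + r by lia.
case: (eqVneq r 0) => r0.
  have := B2 s (b := b - K) ltac:(lia) ltac:(lia). rewrite r0 addn0.
  have c1p := c1_pos. rewrite hd. lia.
have kt2 : k < t.
  have : k * h < t * h by rewrite mulnC in hst; lia.
  by rewrite ltn_pmul2r; lia.
have := B1 (s := s) (a := m + r) (b := b - K) ltac:(lia) ltac:(lia) ltac:(lia) ltac:(lia) ltac:(lia).
rewrite hd. lia.
Qed.

End S9.

Section S10.
Variable A : seq nat.
Variable cs : seq nat.
Variable d t : nat.
Hypothesis hA : kupP A.
Hypothesis ha : ascP A.
Hypothesis hs : sorted geq cs.
Hypothesis ho : all odd cs.
Hypothesis hz : charM A (size A) (kup A (size A)) = 0 :: rcons cs 1.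
Local Notation N := (size A).
Local Notation h := (kup A (size A)).
Local Notation m := (gg A (size A)).
Local Notation c1 := (head 0 cs).
Hypothesis hcs : 0 < size cs.
Hypothesis hd : d = t.*2 + c1.

Let hN1 := hN hA hs ho.
Let h2'' := h2 hs ho hz.
Let e : m + h = N. Proof. have := hN1; rewrite /gg; lia. Qed.

Lemma not_closed s : s < h * t -> ~~ closedAt (Bs A s) d.
Proof.
move=> hst; apply/negP => /(closedAtP d (Bs_kupP hA h2'' s) ltac:(rewrite Bs_last //)) [b [b1 b2 b3]].

have := upper hA ha hs ho hz hcs hd hst b1 b2. lia.
Qed.

Lemma is_closed : closedAt (Bs A (h * t)) d.
Proof.
apply/(closedAtP d (Bs_kupP hA h2'' _) ltac:(rewrite Bs_last //)).
rewrite Bs_gg // Bs_size.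
have hh : h = size cs + 2 := h_eq hs ho hz.
exists (N + h * t - h).+2; split; try lia.
rewrite (shiftk (k := t)) //; try lia.
have -> : (N + h * t - h).+1 - t * h = m.+1 by rewrite /gg mulnC; lia.
have -> : (N + h * t - h).+2 - t * h = m.+2 by rewrite /gg mulnC; lia.
rewrite PP_Bs //; last lia.
have := pS_k hA hs ho hz (k := 0) hcs. rewrite addn0 /pS /=.
case: (cs) hcs hd => // c cs' _ ->. move=> -> /=. rewrite -mul2n. lia.
Qed.

Definition Gt (y : nat) := if y == 0 then 0 else y + t.*2.

Lemma f0_shift x : f0 (t.*2 + x) = Gt (f0 x).
Proof.
rewrite /f0 /Gt oddD odd_double /=.
case: ifP => ox; last by [].
have -> : (x == 0) = false by case: (x) ox.
lia.
Qed.

Lemma last_char : charM (Bs A (h * t)) (N + h * t) h =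
  0 :: rcons [seq c + t.*2 | c <- cs] (1 + t.*2).
Proof.
have hk : kup (Bs A (h * t)) (N + h * t) = h by apply: (Bs_kup hA h2''); lia.
have -> : charM (Bs A (h * t)) (N + h * t) h =
   charM (Bs A (h * t)) (N + h * t) (kup (Bs A (h * t)) (N + h * t)) by rewrite hk.
rewrite charM_win; last by rewrite Bs_size.
  2: exact: Bs_kupP hA h2'' _.
  2: have := hN1; lia.
have -> : win (Bs A (h * t)) (N + h * t) = map (addn t.*2) (win A N).
  rewrite /win hk.
  have -> : gg (Bs A (h * t)) (N + h * t) = h * t + m by rewrite /gg hk; lia.
  rewrite -addnS iotaDl -!map_comp; apply/eq_in_map => i; rewrite mem_iota => hi /=.
  rewrite /pS (shiftk (k := t)) //; try lia.
  have -> : (h * t + i).-1 - t * h = i.-1 by rewrite mulnC; lia.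
  have -> : h * t + i - t * h = i by rewrite mulnC; lia.
  rewrite PP_Bs //; try lia.
rewrite -map_comp (@eq_map _ _ _ (Gt \o f0)); last by move=> x /=; rewrite f0_shift.
rewrite map_comp.
have := win_eq hA hz. rewrite /win => ->.
rewrite /= map_rcons /Gt /=; congr (_ :: rcons _ _).
apply/eq_in_map => c hc.
have oc := allP ho c hc.
by have -> : (c == 0) = false by case: (c) oc.
Qed.

End S10.

End Part9.
Import Part9.

Module Part10.

Section S11.
Variable A : seq nat.
Variable d : nat.
Hypothesis hA : kupP A.
Hypothesis ha : ascP A.
Hypothesis hz : charM A (size A) (kup A (size A)) = [:: 0; 1].
Hypothesis hd : 1 <= d.
Local Notation N := (size A).
Local Notation h := (kup A (size A)).

Let hs : sorted geq [::]. Proof. by []. Qed.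
Let ho : all odd [::]. Proof. by []. Qed.
Let hz' : charM A (size A) (kup A (size A)) = 0 :: rcons [::] 1. Proof. exact: hz. Qed.

Lemma h_2 : h = 2. Proof. exact: h_eq hs ho hz'. Qed.

Lemma N_2 : N = 2.
Proof.
have := hG hA hs ho hz'. rewrite h_2 /=.
have := N2 hA hs ho hz' => n2.
case: (ltnP 2 N) => h3; last lia.
have := kup_ge2 hA (j := N.-1) ltac:(lia). lia.
Qed.

Lemma pS_Bs0 s x : 1 <= x -> x <= 2 + s -> pS (Bs A s) x = x.-1.
Proof.
have h2 : 2 <= h by rewrite h_2.
have e2 := N_2.
elim/ltn_ind: x => x IH x1 xs.
case: (ltnP x 3) => hx.
  case: (eqVneq x 1) => [->|ne].
    by rewrite /pS /= PP_Bs // ?(PP01 hA) // e2.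
  have -> : x = 2 by lia.
  rewrite /pS /= PP_Bs //; last by rewrite e2.
  by have := pS_N hA hs ho hz'; rewrite e2.
rewrite /pS Bs_shift //; try lia; try (rewrite h_2 e2; lia).
rewrite h_2.
have := IH (x - 2) ltac:(lia) ltac:(lia) ltac:(lia).
rewrite /pS. have -> : (x - 2).-1 = x.-1 - 2 by lia. lia.
Qed.

Lemma closed0 s : closedAt (Bs A s) d = (d <= s.+1).
Proof.
have h2 : 2 <= h by rewrite h_2.
have e2 := N_2.
apply/idP/idP.
  move/(closedAtP d (Bs_kupP hA h2 s) ltac:(rewrite Bs_last //)) => [b [b1 b2 b3]].
  rewrite Bs_gg // Bs_size h_2 e2 in b1 b2 b3.
  have eb : b = 2 + s by lia. subst b.
  move: b3; have -> : (2 + s - 2).+1 = (2 + s).-1 by lia.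
  rewrite -/(pS _ _) pS_Bs0 //; lia.
move=> hds; apply/(closedAtP d (Bs_kupP hA h2 s) ltac:(rewrite Bs_last //)).
rewrite Bs_gg // Bs_size h_2 e2.
exists (2 + s); split; try lia.
have -> : (2 + s - 2).+1 = (2 + s).-1 by lia.
rewrite -/(pS _ _) pS_Bs0 //; lia.
Qed.

Lemma last_char0 : odd d -> charM (Bs A d.-1) (N + d.-1) h = [:: 0; d].
Proof.
move=> od.
have h2 : 2 <= h by rewrite h_2.
have e2 := N_2.
have hk : kup (Bs A d.-1) (N + d.-1) = h by apply: (Bs_kup hA h2); lia.
have -> : charM (Bs A d.-1) (N + d.-1) h =
   charM (Bs A d.-1) (N + d.-1) (kup (Bs A d.-1) (N + d.-1)) by rewrite hk.
rewrite charM_win; last by rewrite Bs_size.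
  2: exact: Bs_kupP hA h2 _.
  2: lia.
rewrite /win hk h_2 /gg hk h_2 e2 /=.
rewrite !pS_Bs0; try lia.
have -> : (2 + d.-1 - 2).+1 = d by lia.
rewrite /f0.
have -> : odd d.-1 = false by case: (d) od hd => // n /= /negbTE.
have -> : d.+1.-1 = d by [].
by rewrite od.
Qed.

End S11.

End Part10.
Import Part10.


Unset Implicit Arguments.

Theorem theorem3 (d : nat) (cs : seq nat) :
  odd d -> sorted geq cs -> all odd cs -> head 0 cs <= d ->
  let z := 0 :: rcons cs 1 in
  (exists A, is_ascent z A) /\
  forall A, is_ascent z A ->
  (exists H, is_closure d A H) /\
  forall H, is_closure d A H ->
    match cs with
    | [::] =>
        [/\ num_summits H = d,
            first_summit_char H [:: 0; 1] &
            last_summit_char H [:: 0; d]]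
    | c1 :: _ =>
        let t := (d - c1)./2 in
        [/\ t.*2 = d - c1,
            num_summits H = (size cs + 2) * t + 1,
            first_summit_char H z &
            last_summit_char H (0 :: rcons [seq c + t.*2 | c <- cs] (1 + t.*2))]
    end.
Proof.
move=> od hs ho hc; cbv zeta; split.
  have [A0 [hA0 ha0 hw0]] := exist_win hs ho.
  have [h1 h2 h3] := win_G hA0 ha0.
  exists (rcons A0 (kup A0 (size A0)).+1); split.
  - exact: kupischE.
  - exact: ascP_sorted.
  - rewrite /n_of charM_win //; last first.
      by case: h1 => s1 _ _; lia.
    rewrite h3 hw0 /Target map_rcons /=; congr (_ :: _).
      case: (cs) ho => //= c cs' /andP[oc _].
      rewrite /f0; case: (c) oc => //= n on. by rewrite (negbTE on).
    congr rcons; rewrite -[RHS]map_id; apply/eq_in_map => c hc'.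
    by rewrite /f0 (allP ho c hc').
move=> A [hk hasc hz].
have hA := kupischP hk. have ha := ascendingP hasc.
rewrite /n_of in hz.
have d1 : 1 <= d by case: (d) od.
case: cs hs ho hc hz => [|c1 cs'] hs ho hc hz.
- have hz0 : charM A (size A) (kup A (size A)) = [:: 0; 1] by exact: hz.
  have h2 := h2 hs ho hz. have hG := hG hA hs ho hz. have hlt := hlt hA ha hs ho hz.
  have hT1 : forall s, s < d.-1 -> ~~ closedAt (Bs A s) d.
    by move=> s hs'; rewrite closed0 //; lia.
  have hT2 : closedAt (Bs A d.-1) d by rewrite closed0 //; lia.
  split; first exact: closure_exists.
  move=> H hH.
  have [w [eH hw _]] := closure_shape hA h2 hG hT1 hT2 hH. subst H.
  split.
  + rewrite (num_summitsH hA h2 hlt hG hT2 hw); lia.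
  + by have := first_summitH hA h2 hlt hG hT2 hw; rewrite hz0.
  + by have := last_summitH hA h2 hlt hG hT2 hw; rewrite last_char0.
- set t := (d - c1)./2.
  have oc1 : odd c1 by case/andP: ho.
  have ht : t.*2 = d - c1.
    rewrite /t halfK oddB; last by simpl in hc.
    by rewrite od oc1 /= subn0.
  have hd : d = t.*2 + head 0 (c1 :: cs') by rewrite ht /=; simpl in hc; lia.
  have hcs : 0 < size (c1 :: cs') by [].
  have h2 := h2 hs ho hz. have hG := hG hA hs ho hz. have hlt := hlt hA ha hs ho hz.
  have hT1 := not_closed hA ha hs ho hz hcs hd.
  have hT2 := is_closed hA hs ho hz hcs hd.
  split; first exact: closure_exists.
  move=> H hH.
  have [w [eH hw _]] := closure_shape hA h2 hG hT1 hT2 hH. subst H.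
  split => //.
  + rewrite (num_summitsH hA h2 hlt hG hT2 hw) (h_eq hs ho hz). by rewrite mulnC.
  + by have := first_summitH hA h2 hlt hG hT2 hw; rewrite hz.
  + by have := last_summitH hA h2 hlt hG hT2 hw; rewrite (last_char hA hs ho hz hcs hd).
Qed.
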